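(* Assume (R). Writing $F_n'$, $F_n''$ for derivatives with respect to $u$: $$nF_{n-1}(u)=\begin{cases}F_n'(u),& n\ge2\text{ even},\\ 2F_n(u)+(4u+1)F_n'(u),& n\ge1\text{ odd},\end{cases}$$ $$(n)_2F_{n-2}(u)=\begin{cases}2F_n'(u)+(4u+1)F_n''(u),& n\ge2\text{ even},\\ 6F_n'(u)+(4u+1)F_n''(u),& n\ge3\text{ odd}.\end{cases}$$ For the coefficients, for $0\le k\le d_{n-1}$: $$n\hat f_{n-1,k}=\begin{cases}\hat f_{n,k+1},& n\ge2\text{ even},\\ (4k+2)\hat f_{n,k}+\hat f_{n,k+1},& n\ge1\text{ odd},\end{cases}$$ and for $0\le k\le d_{n-2}$: $$(n)_2\hat f_{n-2,k}=\begin{cases}(4k+2)\hat f_{n,k+1}+\hat f_{n,k+2},& n\ge2\text{ even},\\ (4k+6)\hat f_{n,k+1}+\hat f_{n,k+2},& n\ge3\text{ odd}.\end{cases}$$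
   Context: Let $(\alpha_n)_{n\ge0}$ be an arbitrary sequence of complex numbers with Appell polynomials $A_n(x)=\sum_{\nu=0}^{n}\binom{n}{\nu}\alpha_{n-\nu}x^\nu$; property (R) means $A_n(1-x)=(-1)^nA_n(x)$ for all $n\ge0$. Let $d_n=\lfloor n/2\rfloor$, $\delta_n=1$ if $n$ odd, $0$ otherwise. Under (R), for each $n\ge0$ there is a unique polynomial $F_n(u)=\sum_{k\ge0}f_{n,k}u^k$ of degree at most $d_n$ with $A_n(x)=(2x-1)^{\delta_n}F_n(x(x-1))$ (explicitly $f_{n,k}=2^{2k-n}\sum_{\nu=0}^{d_n-k}\binom{n}{2\nu}\binom{d_n-\nu}{k}S_{2\nu}(1)$ for $k\le d_n$, where $S_m(1)=\sum_{\mu=0}^m\binom m\mu 2^\mu\alpha_\mu$), and $f_{n,k}=0$ for $k>d_n$. Set $\hat f_{n,k}=k!\,f_{n,k}$. $(n)_2=n(n-1)$. *)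

(* Defs.v *)
From HB Require Import structures.
From mathcomp Require Import all_boot all_order all_algebra.
From mathcomp Require Import reals complex.
Set Implicit Arguments.
Unset Strict Implicit.
Unset Printing Implicit Defensive.
Import Order.TTheory GRing.Theory Num.Theory.
Local Open Scope ring_scope.
Local Open Scope complex_scope.

Definition appell (R : realType) (alpha : nat -> R[i]) (n : nat) : {poly R[i]} :=
  \sum_(nu < n.+1) ('C(n, nu)%:R * alpha (n - nu)%N) *: 'X^nu.

Definition propR (R : realType) (alpha : nat -> R[i]) : Prop :=
  forall (n : nat) (x : R[i]), (appell alpha n).[1 - x] = (-1) ^+ n * (appell alpha n).[x].

Definition isFfamily (R : realType) (alpha : nat -> R[i]) (F : nat -> {poly R[i]}) : Prop :=
  forall n : nat, (size (F n) <= n./2 + 1)%N /\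
    appell alpha n = (2%:R *: 'X - 1) ^+ (odd n) * (F n \Po ('X * ('X - 1))).

Definition fhat (R : realType) (F : nat -> {poly R[i]}) (n k : nat) : R[i] :=
  (k`!)%:R * (F n)`_k.

(* Main.v *)
Require Import Defs.
From HB Require Import structures.
From mathcomp Require Import all_boot all_order all_algebra.
From mathcomp Require Import reals complex.
From mathcomp Require Import ring zify.
Import Order.TTheory GRing.Theory Num.Theory.
Local Open Scope ring_scope.

Lemma appell_poly (R : realType) (alpha : nat -> R[i]) n :
  appell alpha n = \poly_(i < n.+1) ('C(n, i)%:R * alpha (n - i)%N).
Proof. by rewrite poly_def. Qed.

Lemma deriv_appell (R : realType) (alpha : nat -> R[i]) n :
  (appell alpha n)^`() = n%:R *: appell alpha n.-1.
Proof.
rewrite !appell_poly; apply/polyP=> i.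
rewrite coef_deriv coefZ !coef_poly.
case: n => [|n] /=; first by rewrite mul0r mul0rn.
rewrite ltnS; case: ltnP => Hi; last by rewrite mul0rn mulr0.
have -> : (n.+1 - i.+1 = n - i)%N by lia.
rewrite mulrA -natrM (mul_bin_diag n.+1 i) natrM.
by rewrite -[LHS]mulr_natl; ring.
Qed.

Section S.
Variable (R : realType).
Local Notation C := (R[i]).
Local Notation u := ('X * ('X - 1) : {poly C}).
Local Notation v := (2%:R *: 'X - 1 : {poly C}).

Lemma size_u : (1 < size u)%N.
Proof. by rewrite -polyC1 mulrC size_mulX ?size_XsubC // -size_poly_eq0 size_XsubC. Qed.

Lemma comp_inj (p q : {poly C}) : p \Po u = q \Po u -> p = q.
Proof.
move=> H; apply/eqP; rewrite -subr_eq0 -(comp_poly_eq0 _ size_u) comp_polyB H subrr //.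
Qed.

Lemma du : u^`() = v.
Proof. rewrite derivM derivB derivX -polyC1 derivC subr0 mulr1 mul1r scaler_nat polyC1; ring. Qed.

Lemma dv : v^`() = 2%:R.
Proof. by rewrite derivB derivZ derivX -polyC1 derivC subr0 scaler_nat. Qed.

Lemma sq : v ^+ 2 = (4%:R *: 'X + 1) \Po u.
Proof. rewrite comp_polyD comp_polyZ comp_polyX comp_polyC !scaler_nat; ring. Qed.

Lemma vnz : v != 0.
Proof.
apply/eqP=> /(congr1 (fun p : {poly C} => p`_1)).
rewrite coefB coefZ coefX coef1 coef0 /= mulr1 subr0 => /eqP.
by rewrite pnatr_eq0.
Qed.
End S.

Lemma polyEven (R : realType) (alpha : nat -> R[i]) (F : nat -> {poly R[i]}) n :
  isFfamily alpha F -> (2 <= n)%N -> ~~ odd n -> n%:R *: F n.-1 = (F n)^`().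
Proof.
move=> HF n2 ev; have [_ En] := HF n; have [_ En1] := HF n.-1.
have od1 : odd n.-1 by case: (n) ev n2 => //= m; rewrite negbK.
have := @deriv_appell R alpha n.
rewrite En En1 od1 (negbTE ev) expr0 mul1r expr1 deriv_comp du => H.
symmetry; apply: (@comp_inj R ((F n)^`()) (n%:R *: F n.-1)).
apply: (mulIf (vnz R)).
by rewrite H comp_polyZ -scalerAl (mulrC (F n.-1 \Po _)).
Qed.

Lemma polyOdd (R : realType) (alpha : nat -> R[i]) (F : nat -> {poly R[i]}) n :
  isFfamily alpha F -> (1 <= n)%N -> odd n ->
  n%:R *: F n.-1 = 2%:R *: F n + (4%:R *: 'X + 1) * (F n)^`().
Proof.
move=> HF n1 od; have [_ En] := HF n; have [_ En1] := HF n.-1.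
have ev1 : odd n.-1 = false by case: (n) od n1 => //= m /negPf.
have := @deriv_appell R alpha n.
rewrite En En1 ev1 od expr0 mul1r expr1 derivM dv deriv_comp du => H.
apply: (@comp_inj R (n%:R *: F n.-1) (2%:R *: F n + (4%:R *: 'X + 1) * (F n)^`())).
rewrite comp_polyZ -H comp_polyD comp_polyM -sq !comp_polyZ.
move: (F n \Po _) ((F n)^`() \Po _) => a b.
rewrite !scaler_nat; ring.
Qed.

Lemma coefL0 (R : realType) (p : {poly R[i]}) :
  ((4%:R *: 'X + 1) * p)`_0 = p`_0.
Proof. by rewrite mulrDl mul1r coefD -scalerAl coefZ coefXM mulr0 add0r. Qed.

Lemma coefLS (R : realType) (p : {poly R[i]}) k :
  ((4%:R *: 'X + 1) * p)`_k.+1 = 4%:R * p`_k + p`_k.+1.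
Proof. by rewrite mulrDl mul1r coefD -scalerAl coefZ coefXM. Qed.

Theorem mainTheorem14 (R : realType) (alpha : nat -> R[i]) (F : nat -> {poly R[i]}) :
  propR alpha -> isFfamily alpha F ->
  (* polynomial identities *)
  (forall n : nat, (2 <= n)%N -> ~~ odd n ->
     n%:R *: F n.-1 = (F n)^`()) /\
  (forall n : nat, (1 <= n)%N -> odd n ->
     n%:R *: F n.-1 = 2%:R *: F n + (4%:R *: 'X + 1) * (F n)^`()) /\
  (forall n : nat, (2 <= n)%N -> ~~ odd n ->
     (n * n.-1)%:R *: F n.-2 = 2%:R *: (F n)^`() + (4%:R *: 'X + 1) * (F n)^`(2)) /\
  (forall n : nat, (3 <= n)%N -> odd n ->
     (n * n.-1)%:R *: F n.-2 = 6%:R *: (F n)^`() + (4%:R *: 'X + 1) * (F n)^`(2)) /\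
  (* coefficient identities *)
  (forall n k : nat, (2 <= n)%N -> ~~ odd n -> (k <= n.-1./2)%N ->
     n%:R * fhat F n.-1 k = fhat F n k.+1) /\
  (forall n k : nat, (1 <= n)%N -> odd n -> (k <= n.-1./2)%N ->
     n%:R * fhat F n.-1 k = (4 * k + 2)%:R * fhat F n k + fhat F n k.+1) /\
  (forall n k : nat, (2 <= n)%N -> ~~ odd n -> (k <= n.-2./2)%N ->
     (n * n.-1)%:R * fhat F n.-2 k = (4 * k + 2)%:R * fhat F n k.+1 + fhat F n k.+2) /\
  (forall n k : nat, (3 <= n)%N -> odd n -> (k <= n.-2./2)%N ->
     (n * n.-1)%:R * fhat F n.-2 k = (4 * k + 6)%:R * fhat F n k.+1 + fhat F n k.+2).
Proof.
move=> _ HF.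
have P1 := @polyEven R alpha F _ HF.
have P2 := @polyOdd R alpha F _ HF.
have P3 : forall n : nat, (2 <= n)%N -> ~~ odd n ->
     (n * n.-1)%:R *: F n.-2 = 2%:R *: (F n)^`() + (4%:R *: 'X + 1) * (F n)^`(2).
  move=> n n2 ev.
  have H0 := P1 n n2 ev.
  have H1 : n.-1%:R *: F n.-2 = 2%:R *: F n.-1 + (4%:R *: 'X + 1) * (F n.-1)^`().
    by apply: P2; [lia | case: (n) ev n2 => //= m; rewrite negbK].
  change (F n)^`(2) with ((F n)^`())^`().
  rewrite natrM -scalerA H1 -H0 derivZ.
  move: (F n.-1) ((F n.-1)^`()) => a b.
  rewrite !scaler_nat; ring.
have P4 : forall n : nat, (3 <= n)%N -> odd n ->
     (n * n.-1)%:R *: F n.-2 = 6%:R *: (F n)^`() + (4%:R *: 'X + 1) * (F n)^`(2).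
  move=> n n3 od.
  have H1 := P2 n (ltnW (ltnW n3)) od.
  have H0 : n.-1%:R *: F n.-2 = (F n.-1)^`().
    by apply: P1; [lia | case: (n) od n3 => //= m; rewrite negbK].
  change (F n)^`(2) with ((F n)^`())^`().
  rewrite natrM -scalerA H0 -derivZ H1 derivD derivZ derivM derivD derivZ derivX.
  rewrite -polyC1 derivC polyC1.
  move: ((F n)^`()) ((F n)^`()^`()) => a b.
  rewrite !scaler_nat; ring.
split => //; split => //; split => //; split => //.
split.
  move=> n k n2 ev _; have := congr1 (fun p : {poly R[i]} => p`_k) (P1 n n2 ev).
  rewrite /= coefZ coef_deriv /fhat factS natrM => H.
  rewrite mulrCA H -mulr_natr; ring.
split.
  move=> n k n1 od _; have := congr1 (fun p : {poly R[i]} => p`_k) (P2 n n1 od).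
  rewrite coefZ coefD coefZ /fhat; case: k => [|k].
    rewrite coefL0 !coef_deriv => H.
    rewrite !factS ?fact0 mulrCA H !natrM; ring.
  rewrite coefLS !coef_deriv => H.
  rewrite !factS ?fact0 mulrCA H !natrM; ring.
split.
  move=> n k n2 ev _; have := congr1 (fun p : {poly R[i]} => p`_k) (P3 n n2 ev).
  rewrite coefZ coefD coefZ /fhat; case: k => [|k].
    rewrite coefL0 !coef_deriv => H.
    rewrite !factS ?fact0 mulrCA H !natrM; ring.
  rewrite coefLS !coef_deriv => H.
  rewrite !factS ?fact0 mulrCA H !natrM; ring.
  move=> n k n3 od _; have := congr1 (fun p : {poly R[i]} => p`_k) (P4 n n3 od).
  rewrite coefZ coefD coefZ /fhat; case: k => [|k].
    rewrite coefL0 !coef_deriv => H.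
    rewrite !factS ?fact0 mulrCA H !natrM; ring.
  rewrite coefLS !coef_deriv => H.
  rewrite !factS ?fact0 mulrCA H !natrM; ring.
Qed.
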